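(* Let $L$ be a locale. Then $T:\mathbf{Fuzz}(L)\to\mathbf{Mon}(L_{+})$ is a well-defined functor, $F\mapsto \psi_F$ (with a sheaf morphism $g:F\to G$ sent to $(g_i, \text{the relation }\psi_F\le \psi_G\circ g_i)$) is a well-defined functor $\psi:\mathbf{Mon}(L_{+})\to\mathbf{Fuzz}(L)$, and these functors form an equivalence of categories: there is a natural isomorphism $F\cong T(\psi_F)$ for every $F\in\mathbf{Mon}(L_{+})$, and $\psi_{T(\phi)}=\phi$ for every fuzzy set $\phi:X\to L$ (where $T(\phi)(i)=X$).
   Context: A locale (frame) $L$ is a complete lattice in which finite meets distribute over arbitrary joins. It carries a Grothendieck topology in which a family $\{b_j \le a\}$ covers $a$ iff $\bigvee_j b_j = a$; a sieve on $a$ is covering iff its join is $a$. A presheaf on $L$ is a functor $L^{op}\to\mathbf{Set}$; it is a sheaf if $F(a)\to\varprojlim_{b\in R}F(b)$ is a bijection for every covering sieve $R$ of every $a$. Write $i$ for the bottom element of $L$ and $L_{+}=L\sqcup\{0\}$ for the locale obtained by adjoining a new bottom element $0<i$. A sheaf of monomorphisms on $L_{+}$ is a sheaf $F$ on $L_{+}$ such that for every $a\le b$ in $L$ the restriction $F(b)\to F(a)$ is injective; $\mathbf{Mon}(L_{+})$ is the full subcategory of sheaves on $L_{+}$ on these objects. For $c\in L$ we regard $F(c)$ as a subset of the generic fibre $F(i)$. $\mathbf{Fuzz}(L)$: objects are functions $\psi:X\to L$ ($X$ a set); a morphism $(X,\psi)\to(Y,\phi)$ is a function $f:X\to Y$ such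 that $\psi(x)\le\phi(f(x))$ for all $x\in X$. For $\psi:X\to L$, $T(\psi)$ is the presheaf on $L_{+}$ with $T(\psi)(a)=\psi^{-1}(\{y\in L: y\ge a\})$ for $a\in L$, $T(\psi)(0)=\ast$, restriction maps the inclusions; a morphism $f$ induces $T(\psi)\to T(\phi)$ by restricting $f$. For $F\in\mathbf{Mon}(L_{+})$, $\psi_F:F(i)\to L$ is $\psi_F(x)=\sup\{b\in L: x\in F(b)\}$ (this supremum is attained). *)

(* Defs.v *)
Record Frame := {
  car :> Type;
  le : car -> car -> Prop;
  sup : (car -> Prop) -> car;
  meet : car -> car -> car;
  le_refl : forall a, le a a;
  le_trans : forall a b c, le a b -> le b c -> le a c;
  le_antisym : forall a b, le a b -> le b a -> a = b;
  sup_ub : forall (S : car -> Prop) a, S a -> le a (sup S);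
  sup_least : forall (S : car -> Prop) b, (forall a, S a -> le a b) -> le (sup S) b;
  meet_lb1 : forall a b, le (meet a b) a;
  meet_lb2 : forall a b, le (meet a b) b;
  meet_glb : forall a b c, le c a -> le c b -> le c (meet a b);
  meet_sup_distr : forall a (S : car -> Prop),
      meet a (sup S) = sup (fun c => exists s, S s /\ c = meet a s)
}.

Arguments le {f} _ _.
Arguments sup {f} _.
Arguments meet {f} _ _.
Arguments le_trans {f} {a b c} _ _.
Arguments sup_least {f} S b _.

Section Defs.
Variable L : Frame.

Definition bot : L := sup (fun _ => False).

Lemma bot_le : forall b : L, le bot b.
Proof. intro b. apply sup_least. intros a []. Qed.

(* L_+ = L ⊔ {0}: [None] is the new bottom 0, [Some a] is a ∈ L. *)
Definition lep (a b : option L) : Prop :=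
  match a, b with
  | None, _ => True
  | Some _, None => False
  | Some a, Some b => le a b
  end.

Record PreData := {
  sec :> option L -> Type;
  res : forall a b, lep a b -> sec b -> sec a
}.

Definition is_presheaf (F : PreData) : Prop :=
  (forall a (h : lep a a) x, res F a a h x = x) /\
  (forall a b c (hab : lep a b) (hbc : lep b c) (hac : lep a c) x,
      res F a b hab (res F b c hbc x) = res F a c hac x).

Definition sieve (R : option L -> Prop) (a : option L) : Prop :=
  (forall b, R b -> lep b a) /\ (forall b c, R b -> lep c b -> R c).

Definition covers (R : option L -> Prop) (a : option L) : Prop :=
  (forall b, R b -> lep b a) /\
  (forall c, (forall b, R b -> lep b c) -> lep a c).

Definition matching (F : PreData) (R : option L -> Prop)
  (s : forall b, R b -> F b) : Prop :=
  forall b c (hb : R b) (hc : R c) (h : lep c b), res F c b h (s b hb) = s c hc.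

Definition is_sheaf (F : PreData) : Prop :=
  forall a R, sieve R a -> covers R a ->
    (forall x y : F a,
        (forall b (hb : R b) (h : lep b a), res F b a h x = res F b a h y) -> x = y) /\
    (forall s : forall b, R b -> F b, matching F R s ->
        exists x : F a, forall b (hb : R b) (h : lep b a), res F b a h x = s b hb).

Definition is_mono (F : PreData) : Prop :=
  forall (a b : L) (h : le a b) (x y : F (Some b)),
    res F (Some a) (Some b) h x = res F (Some a) (Some b) h y -> x = y.

Definition is_Mon (F : PreData) : Prop :=
  is_presheaf F /\ is_sheaf F /\ is_mono F.

Definition natural (F G : PreData) (g : forall a, F a -> G a) : Prop :=
  forall a b (h : lep a b) (x : F b), g a (res F a b h x) = res G a b h (g b x).

Definition bijective {A B : Type} (f : A -> B) : Prop :=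
  (forall x y, f x = f y -> x = y) /\ (forall y, exists x, f x = y).

Record Fuzzy := { fset : Type; fval : fset -> L }.
Arguments fval : clear implicits.

Definition fuzzy_hom (X Y : Fuzzy) (f : fset X -> fset Y) : Prop :=
  forall x, le (fval X x) (fval Y (f x)).

Definition Tsec (X : Fuzzy) (a : option L) : Type :=
  match a with
  | None => unit
  | Some a => {x : fset X | le a (fval X x)}
  end.

Definition Tres (X : Fuzzy) (a b : option L) : lep a b -> Tsec X b -> Tsec X a :=
  match a as a', b as b' return lep a' b' -> Tsec X b' -> Tsec X a' with
  | None, _ => fun _ _ => tt
  | Some a, None => fun h _ => False_rect _ h
  | Some a, Some b => fun h s =>
      exist _ (proj1_sig s) (le_trans h (proj2_sig s))
  end.



Definition T (X : Fuzzy) : PreData := {| sec := Tsec X; res := Tres X |}.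

Definition Tmap (X Y : Fuzzy) (f : fset X -> fset Y) (hf : fuzzy_hom X Y f)
  : forall a, T X a -> T Y a :=
  fun a => match a as a' return Tsec X a' -> Tsec Y a' with
  | None => fun _ => tt
  | Some a => fun s => exist _ (f (proj1_sig s)) (le_trans (proj2_sig s) (hf _))
  end.

(* psi_F(x) = sup { b | x ∈ F(b) }, F(b) seen inside F(i) via restriction *)
Definition psiF (F : PreData) (x : F (Some bot)) : L :=
  sup (fun b => exists y : F (Some b), res F (Some bot) (Some b) (bot_le b) y = x).

Definition psiOb (F : PreData) : Fuzzy := {| fset := F (Some bot); fval := psiF F |}.

End Defs.

Arguments bot {L}.
Arguments lep {L} a b.
Arguments sec {L} _ _.
Arguments res {L} _ a b _ _.
Arguments is_Mon {L} F.
Arguments natural {L} F G g.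
Arguments fset {L} _.
Arguments fval {L} _ _.
Arguments fuzzy_hom {L} X Y f.
Arguments T {L} X.
Arguments Tmap {L} X Y f hf a _.
Arguments psiF {L} F x.
Arguments psiOb {L} F.

(* Main.v *)
Require Import Defs.
From Stdlib Require Import Classical ClassicalEpsilon ProofIrrelevance.

Lemma sig_eq {A} {P : A -> Prop} (x y : {a : A | P a}) :
  proj1_sig x = proj1_sig y -> x = y.
Proof.
  destruct x as [x hx], y as [y hy]; simpl; intros ->.
  f_equal; apply proof_irrelevance.
Qed.

Lemma cover_some (L : Frame) (R : option L -> Prop) a :
  covers L R (Some a) -> exists b, R (Some b).
Proof.
  intros [_ HC]. destruct (classic (exists b, R (Some b))) as [H|H]; auto.
  exfalso. apply (HC None). intros [b|] hb; simpl; auto. apply H; eauto.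
Qed.

Lemma T_Mon (L : Frame) (X : Fuzzy L) : is_Mon (T X).
Proof.
  split; [|split].
  - split.
    + intros [a|] h x; simpl.
      * apply sig_eq; reflexivity.
      * destruct x; reflexivity.
    + intros [a|] [b|] [c|] hab hbc hac x; simpl in *; try contradiction;
        try reflexivity. apply sig_eq; reflexivity.
  - intros [a|] R HS HC.
    + destruct (cover_some L R a HC) as [b0 hb0]. split.
      * intros x y H.
        pose proof (H (Some b0) hb0 (proj1 HS _ hb0)) as E.
        apply (f_equal (@proj1_sig _ _)) in E. simpl in E. apply sig_eq. exact E.
      * intros s Hm.
        set (x0 := proj1_sig (s (Some b0) hb0) : fset X).
        assert (Hcl : forall b hb, proj1_sig (s (Some b) hb : {x | le b (fval X x)}) = x0).
        { intros b hb.
          assert (hm : R (Some (meet b b0))).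
          { apply (proj2 HS (Some b)); auto. simpl. apply meet_lb1. }
          pose proof (Hm (Some b) (Some (meet b b0)) hb hm (meet_lb1 L b b0)) as E1.
          pose proof (Hm (Some b0) (Some (meet b b0)) hb0 hm (meet_lb2 L b b0)) as E2.
          apply (f_equal (@proj1_sig _ _)) in E1. apply (f_equal (@proj1_sig _ _)) in E2.
          simpl in E1, E2. unfold x0. rewrite E1, E2. reflexivity. }
        assert (ha : le a (fval X x0)).
        { apply (proj2 HC (Some (fval X x0))). intros [b|] hb; simpl; auto.
          rewrite <- (Hcl b hb). exact (proj2_sig (s (Some b) hb : {x | le b (fval X x)})). }
        exists (exist _ x0 ha : Tsec L X (Some a)).
        intros [b|] hb h; simpl.
        -- apply sig_eq. simpl. symmetry. apply Hcl.
        -- destruct (s None hb). reflexivity.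
    + split.
      * intros [] [] _. reflexivity.
      * intros s _. exists tt. intros [b|] hb h; simpl in *; [contradiction|].
        destruct (s None hb); reflexivity.
  - intros a b h x y H. apply (f_equal (@proj1_sig _ _)) in H. simpl in H.
    apply sig_eq. exact H.
Qed.

Definition eta (L : Frame) (F : PreData L) (a : option L) : F a -> T (psiOb F) a :=
  match a return F a -> Tsec L (psiOb F) a with
  | None => fun _ => tt
  | Some a => fun x =>
      exist _ (res F (Some bot) (Some a) (bot_le L a) x)
        (sup_ub L _ a (ex_intro _ x eq_refl))
  end.

Lemma none_single (L : Frame) (F : PreData L) : is_sheaf L F ->
  exists x : F None, forall y, y = x.
Proof.
  intros HS.
  destruct (HS None (fun _ => False)) as [Hsep Hgl].
  - split; [intros b []|intros b c []].
  - split; [intros b []|intros c _; exact I].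
  - destruct (Hgl (fun b hb => False_rect _ hb)) as [x _].
    + intros b c [].
    + exists x. intros y. apply Hsep. intros b [].
Qed.

Lemma attained (L : Frame) (F : PreData L) (HM : is_Mon F) (y : F (Some bot)) :
  exists x : F (Some (psiF F y)),
    res F (Some bot) (Some (psiF F y)) (bot_le L _) x = y.
Proof.
  destruct HM as [[Hid Hcomp] [HS Hmono]].
  set (p := psiF F y).
  set (S := fun b => exists z : F (Some b), res F (Some bot) (Some b) (bot_le L b) z = y).
  set (R := fun c : option L => match c with None => True | Some b => S b end).
  assert (Sbot : S bot). { exists y. apply Hid. }
  assert (HR1 : forall b, R b -> lep b (Some p)).
  { intros [b|] hb; simpl; auto. apply sup_ub. exact hb. }
  assert (Hsv : sieve L R (Some p)).
  { split; auto. intros [b|] [c|] hb hcb; simpl in *; auto; try contradiction.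
    destruct hb as [z hz]. exists (res F (Some c) (Some b) hcb z).
    rewrite (Hcomp (Some bot) (Some c) (Some b) _ _ (bot_le L b)). exact hz. }
  assert (Hcv : covers L R (Some p)).
  { split; auto. intros [c|] Hc.
    - simpl. apply sup_least. intros b hb. exact (Hc (Some b) hb).
    - exact (Hc (Some bot) Sbot). }
  set (P := fun c => match c return F c -> Prop with
                     | None => fun _ => True
                     | Some b => fun z => res F (Some bot) (Some b) (bot_le L b) z = y end).
  destruct (none_single L F HS) as [n0 Hn0].
  assert (ex : forall c, R c -> exists z, P c z).
  { intros [b|] hb; simpl in *.
    - exact hb.
    - exists n0. exact I. }
  set (s := fun c hc => proj1_sig (constructive_indefinite_description _ (ex c hc))).
  assert (sP : forall c hc, P c (s c hc)).
  { intros c hc. exact (proj2_sig (constructive_indefinite_description _ (ex c hc))). }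
  destruct (HS (Some p) R Hsv Hcv) as [_ Hgl].
  destruct (Hgl s) as [x Hx].
  - intros b [c|] hb hc h.
    + destruct b as [b|]; [|contradiction].
      apply (Hmono bot c (bot_le L c)).
      rewrite (Hcomp (Some bot) (Some c) (Some b) _ _ (bot_le L b)).
      pose proof (sP _ hb) as E1. pose proof (sP _ hc) as E2. simpl in E1, E2.
      rewrite E1, E2. reflexivity.
    + rewrite (Hn0 (res _ _ _ _ _)), (Hn0 (s None hc)). reflexivity.
  - exists x. rewrite (Hx (Some bot) (Sbot : R (Some bot)) (bot_le L p)).
    pose proof (sP (Some bot) Sbot) as E. simpl in E. rewrite Hid in E. exact E.
Qed.

Theorem theorem12 (L : Frame) :
  (* T : Fuzz(L) -> Mon(L_+) is a well-defined functor *)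
  (forall X : Fuzzy L, is_Mon (T X)) /\
  (forall (X Y : Fuzzy L) (f : fset X -> fset Y) (hf : fuzzy_hom X Y f),
      natural (T X) (T Y) (Tmap X Y f hf)) /\
  (forall (X : Fuzzy L) (hid : fuzzy_hom X X (fun x => x)) a (s : T X a),
      Tmap X X (fun x => x) hid a s = s) /\
  (forall (X Y Z : Fuzzy L) (f : fset X -> fset Y) (g : fset Y -> fset Z)
     (hf : fuzzy_hom X Y f) (hg : fuzzy_hom Y Z g)
     (hgf : fuzzy_hom X Z (fun x => g (f x))) a (s : T X a),
      Tmap X Z (fun x => g (f x)) hgf a s = Tmap Y Z g hg a (Tmap X Y f hf a s)) /\
  (* psi : Mon(L_+) -> Fuzz(L) is well defined on morphisms *)
  (forall (F G : PreData L) (g : forall a, F a -> G a),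
      is_Mon F -> is_Mon G -> natural F G g ->
      fuzzy_hom (psiOb F) (psiOb G) (g (Some bot))) /\
  (* natural isomorphism F ≅ T(psi_F) *)
  (exists eta : forall (F : PreData L) a, F a -> T (psiOb F) a,
      (forall F : PreData L, is_Mon F ->
          natural F (T (psiOb F)) (eta F) /\ forall a, bijective (eta F a)) /\
      (forall (F G : PreData L) (g : forall a, F a -> G a),
          is_Mon F -> is_Mon G -> natural F G g ->
          forall (hg : fuzzy_hom (psiOb F) (psiOb G) (g (Some bot))) a (x : F a),
            eta G a (g a x) = Tmap (psiOb F) (psiOb G) (g (Some bot)) hg a (eta F a x))) /\
  (* psi_{T(phi)} = phi *)
  (forall (X : Fuzzy L) (x : fset X) (h : le bot (fval X x)),
      psiF (T X) (exist _ x h) = fval X x).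
Proof.
  split; [exact (T_Mon L)|].
  split.
  { intros X Y f hf [a|] [b|] h x; simpl in *; try contradiction; try reflexivity.
    apply sig_eq; reflexivity. }
  split.
  { intros X hid [a|] s; simpl.
    - apply sig_eq; reflexivity.
    - destruct s; reflexivity. }
  split.
  { intros X Y Z f g hf hg hgf [a|] s; simpl.
    - apply sig_eq; reflexivity.
    - reflexivity. }
  split.
  { intros F G g HF HG Hg x. unfold psiOb, psiF; simpl.
    apply sup_least. intros b [y Hy]. apply sup_ub.
    exists (g (Some b) y). rewrite <- (Hg (Some bot) (Some b) (bot_le L b) y), Hy.
    reflexivity. }
  split.
  { exists (eta L). split.
    - intros F HM. split.
      + intros [a|] [b|] h x; simpl in *; try contradiction; try reflexivity.
        apply sig_eq; simpl.
        apply (proj2 (proj1 HM) (Some bot) (Some a) (Some b)).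
      + intros [a|]; split.
        * intros x1 x2 E. apply (f_equal (@proj1_sig _ _)) in E. simpl in E.
          exact (proj2 (proj2 HM) bot a (bot_le L a) x1 x2 E).
        * intros [y hy]. destruct (attained L F HM y) as [x Hx].
          exists (res F (Some a) (Some (psiF F y)) hy x).
          apply sig_eq; simpl.
          rewrite (proj2 (proj1 HM) (Some bot) (Some a) (Some (psiF F y)) _ _ (bot_le L (psiF F y))). exact Hx.
        * intros x1 x2 _. destruct (none_single L F (proj1 (proj2 HM))) as [n0 Hn0].
          rewrite (Hn0 x1), (Hn0 x2). reflexivity.
        * intros []. destruct (none_single L F (proj1 (proj2 HM))) as [n0 Hn0].
          exists n0. reflexivity.
    - intros F G g HF HG Hg hg [a|] x; simpl.
      + apply sig_eq; simpl. symmetry. apply Hg.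
      + reflexivity. }
  intros X x h. unfold psiF. apply le_antisym.
  - apply sup_least. intros b [[x' hb'] Hy]. simpl in Hy.
    apply (f_equal (@proj1_sig _ _)) in Hy. simpl in Hy. subst x'. exact hb'.
  - apply sup_ub. exists (exist _ x (le_refl L _) : Tsec L X (Some (fval X x))).
    apply sig_eq; reflexivity.
Qed.
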